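(* Let $k$ be an algebraically closed field, $A$ a finite dimensional $k$-algebra and $f\colon P_1\to P_0$ a morphism in $\operatorname{proj}A$. Then $\mathcal{W}_f$ is a wide subcategory of $\operatorname{mod}A$ (closed under kernels, cokernels and extensions).
   Context: Let $\nu=D\operatorname{Hom}_A(-,A)$ be the Nakayama functor, $C_f=\operatorname{Cok}f$ and $K_{\nu f}=\operatorname{Ker}(\nu f\colon\nu P_1\to\nu P_0)$. Define $\overline{\mathcal{T}}_f=\{X\in\operatorname{mod}A\mid\operatorname{Hom}_A(X,K_{\nu f})=0\}$, $\overline{\mathcal{F}}_f=\{X\in\operatorname{mod}A\mid\operatorname{Hom}_A(C_f,X)=0\}$ and $\mathcal{W}_f=\overline{\mathcal{T}}_f\cap\overline{\mathcal{F}}_f$. *)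

(* Defs.v *)
(* Finite-dimensional modules over a finite-dimensional
   k-algebra A are represented concretely as matrix representations. *)
From HB Require Import structures.
From mathcomp Require Import all_boot all_order all_algebra all_field.
Set Implicit Arguments. Unset Strict Implicit. Unset Printing Implicit Defensive.
Import GRing.Theory.
Local Open Scope ring_scope.

Section ModA.
Variables (k : fieldType) (A : falgType k).

(* A (finite-dimensional, left) A-module of k-dimension n: the action
   a |-> rho a on column vectors k^n; rho is a unital k-algebra morphism. *)
Definition is_lmod (n : nat) (rho : A -> 'M[k]_n) : Prop :=
  [/\ rho 1 = 1%:M,
      forall a b, rho (a * b) = rho a *m rho b
    & forall (c : k) a b, rho (c *: a + b) = c *: rho a + rho b].

Definition is_hom nX nY (rX : A -> 'M[k]_nX) (rY : A -> 'M[k]_nY)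
  (M : 'M[k]_(nY, nX)) : Prop := forall a, M *m rX a = rY a *m M.

(* (K, g) is a kernel of M : X -> Y  (g : K -> X injective, Im g = Ker M) *)
Definition is_kernel nK nX nY (rK : A -> 'M[k]_nK) (rX : A -> 'M[k]_nX)
  (rY : A -> 'M[k]_nY) (g : 'M[k]_(nX, nK)) (M : 'M[k]_(nY, nX)) : Prop :=
  [/\ is_hom rK rX g, M *m g = 0, \rank g = nK & (\rank g + \rank M)%N = nX].

(* (C, h) is a cokernel of M : X -> Y  (h : Y -> C surjective, Ker h = Im M) *)
Definition is_cokernel nX nY nC (rX : A -> 'M[k]_nX) (rY : A -> 'M[k]_nY)
  (rC : A -> 'M[k]_nC) (M : 'M[k]_(nY, nX)) (h : 'M[k]_(nC, nY)) : Prop :=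
  [/\ is_hom rY rC h, h *m M = 0, \rank h = nC & (\rank M + \rank h)%N = nY].

Definition is_ses nX nY nZ (rX : A -> 'M[k]_nX) (rY : A -> 'M[k]_nY)
  (rZ : A -> 'M[k]_nZ) (g : 'M[k]_(nY, nX)) (h : 'M[k]_(nZ, nY)) : Prop :=
  [/\ is_hom rX rY g, is_hom rY rZ h, h *m g = 0,
      \rank g = nX & \rank h = nZ] /\ (nX + nZ)%N = nY.

Definition is_proj nP (rP : A -> 'M[k]_nP) : Prop :=
  is_lmod rP /\
  forall nY nZ (rY : A -> 'M[k]_nY) (rZ : A -> 'M[k]_nZ)
         (h : 'M[k]_(nZ, nY)) (u : 'M[k]_(nZ, nP)),
    is_lmod rY -> is_lmod rZ -> is_hom rY rZ h -> \rank h = nZ ->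
    is_hom rP rZ u -> exists v : 'M[k]_(nY, nP), is_hom rP rY v /\ h *m v = u.

Definition modclass := forall n : nat, (A -> 'M[k]_n) -> Prop.

Definition is_wide (W : modclass) : Prop :=
  [/\ (forall nX nY (rX : A -> 'M[k]_nX) (rY : A -> 'M[k]_nY) (M : 'M[k]_(nY, nX)),
         is_lmod rX -> is_lmod rY -> W nX rX -> W nY rY -> is_hom rX rY M ->
         forall nK (rK : A -> 'M[k]_nK) (g : 'M[k]_(nX, nK)),
           is_lmod rK -> is_kernel rK rX rY g M -> W nK rK),
      (forall nX nY (rX : A -> 'M[k]_nX) (rY : A -> 'M[k]_nY) (M : 'M[k]_(nY, nX)),
         is_lmod rX -> is_lmod rY -> W nX rX -> W nY rY -> is_hom rX rY M ->
         forall nC (rC : A -> 'M[k]_nC) (h : 'M[k]_(nC, nY)),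
           is_lmod rC -> is_cokernel rX rY rC M h -> W nC rC)
    & (forall nX nY nZ (rX : A -> 'M[k]_nX) (rY : A -> 'M[k]_nY)
              (rZ : A -> 'M[k]_nZ) (g : 'M[k]_(nY, nX)) (h : 'M[k]_(nZ, nY)),
         is_lmod rX -> is_lmod rY -> is_lmod rZ -> W nX rX -> W nZ rZ ->
         is_ses rX rY rZ g h -> W nY rY)].

Definition adim := \dim (fullv : {vspace A}).
Definition abasis : adim.-tuple A := vbasis fullv.

Definition Lmx (a : A) : 'M[k]_adim :=
  \matrix_(i, j) coord abasis i (a * tnth abasis j).
Definition Rmx (a : A) : 'M[k]_adim :=
  \matrix_(i, j) coord abasis i (tnth abasis j * a).

(* Hom_A(P, A) as a subspace of 'rV_(adim * n) (via mxvec) *)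
Definition homA_space n (rP : A -> 'M[k]_n) : 'M[k]_(adim * n) :=
  (\bigcap_(i < adim)
     kermx (lin_mx (fun phi : 'M[k]_(adim, n) =>
              phi *m rP (tnth abasis i) - Lmx (tnth abasis i) *m phi)))%MS.

Definition nu_dim n (rP : A -> 'M[k]_n) : nat := \rank (homA_space rP).
Definition hbase n (rP : A -> 'M[k]_n) : 'M[k]_(nu_dim rP, adim * n) :=
  row_base (homA_space rP).

(* Hom_A(P,A) is a right A-module ((phi.a)(p) = phi(p) a); in coordinates
   (row vectors w.r.t. hbase) the right action of a is c |-> c *m nu_act a.
   Its k-dual D Hom_A(P,A) is the left module with action nu_act on
   column vectors (dual coordinates). *)
Definition nu_act n (rP : A -> 'M[k]_n) (a : A) : 'M[k]_(nu_dim rP) :=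
  lin1_mx (fun c : 'rV[k]_(nu_dim rP) =>
    mxvec (Rmx a *m vec_mx (c *m hbase rP)) *m pinvmx (hbase rP)).

(* nu f = D Hom_A(f, A) : nu P1 -> nu P0 for f : P1 -> P0. Hom_A(f,A) is
   phi |-> phi o f, i.e. c0 |-> c0 *m nu_mor f; its dual is the same matrix
   acting on column vectors. *)
Definition nu_mor n1 n0 (rP1 : A -> 'M[k]_n1) (rP0 : A -> 'M[k]_n0)
  (f : 'M[k]_(n0, n1)) : 'M[k]_(nu_dim rP0, nu_dim rP1) :=
  lin1_mx (fun c0 : 'rV[k]_(nu_dim rP0) =>
    mxvec (vec_mx (c0 *m hbase rP0) *m f) *m pinvmx (hbase rP1)).

(* \overline{T}_f : Hom_A(X, K_{nu f}) = 0, for (any, equivalently every)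
   kernel K_{nu f} of nu f. *)
Definition Tbar n1 n0 (rP1 : A -> 'M[k]_n1) (rP0 : A -> 'M[k]_n0)
  (f : 'M[k]_(n0, n1)) : modclass := fun nX rX =>
  forall nK (rK : A -> 'M[k]_nK) (iota : 'M[k]_(nu_dim rP1, nK)),
    is_lmod rK -> is_kernel rK (nu_act rP1) (nu_act rP0) iota (nu_mor rP1 rP0 f) ->
    forall M : 'M[k]_(nK, nX), is_hom rX rK M -> M = 0.

(* \overline{F}_f : Hom_A(C_f, X) = 0, C_f a cokernel of f. *)
Definition Fbar n1 n0 (rP1 : A -> 'M[k]_n1) (rP0 : A -> 'M[k]_n0)
  (f : 'M[k]_(n0, n1)) : modclass := fun nX rX =>
  forall nC (rC : A -> 'M[k]_nC) (pi : 'M[k]_(nC, n0)),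
    is_lmod rC -> is_cokernel rP1 rP0 rC f pi ->
    forall M : 'M[k]_(nX, nC), is_hom rC rX M -> M = 0.

Definition Wf n1 n0 (rP1 : A -> 'M[k]_n1) (rP0 : A -> 'M[k]_n0)
  (f : 'M[k]_(n0, n1)) : modclass := fun nX rX =>
  Tbar rP1 rP0 f rX /\ Fbar rP1 rP0 f rX.

End ModA.

(* Main.v *)
Require Import Defs.
From HB Require Import structures.
From mathcomp Require Import all_boot all_order all_algebra all_field.
From mathcomp Require Import ring.
Set Implicit Arguments. Unset Strict Implicit. Unset Printing Implicit Defensive.
Import GRing.Theory.
Local Open Scope ring_scope.

(* Proof of Proposition 3.7 via the characterization
   X in W_f  <->  Hom_A(f, X) : Hom_A(P0, X) -> Hom_A(P1, X) is bijective,
   using the Nakayama duality Hom_A(X, nu P) ~ D Hom_A(P, X) (via dual bases). *)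

Section Lin.
Variable k : fieldType.

Lemma mul_rV_lin1' m n (f : 'rV[k]_m -> 'rV[k]_n) :
  (forall a u v, f (a *: u + v) = a *: f u + f v) -> forall u, u *m lin1_mx f = f u.
Proof.
move=> lf u.
pose F : {linear 'rV[k]_m -> 'rV[k]_n} := HB.pack f (GRing.isLinear.Build _ _ _ _ f lf).
exact: (mul_rV_lin1 F).
Qed.

Lemma mul_vec_lin' m1 n1 m2 n2 (f : 'M[k]_(m1, n1) -> 'M[k]_(m2, n2)) :
  (forall a u v, f (a *: u + v) = a *: f u + f v) -> forall u, mxvec u *m lin_mx f = mxvec (f u).
Proof.
move=> lf u.
pose F : {linear 'M[k]_(m1, n1) -> 'M[k]_(m2, n2)} := HB.pack f (GRing.isLinear.Build _ _ _ _ f lf).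
exact: (mul_vec_lin F).
Qed.

Lemma mx_ext_col m n (X Y : 'M[k]_(m, n)) : (forall v : 'cV_n, X *m v = Y *m v) -> X = Y.
Proof.
move=> H; apply/trmx_inj/row_matrixP => j; rewrite !rowE; apply: trmx_inj; by rewrite !trmx_mul !trmxK H.
Qed.

Lemma mx_ext_row m n (X Y : 'M[k]_(m, n)) : (forall v : 'rV_m, v *m X = v *m Y) -> X = Y.
Proof.
move=> H; apply/row_matrixP => j; rewrite !rowE; exact: H.
Qed.

End Lin.


Section Coord.
Variables (k : fieldType) (A : falgType k).
Local Notation d := (adim A).
Local Notation bs := (abasis A).
Implicit Types (a b y : A) (c : k) (v w u : 'cV[k]_d).

Definition cv (a : A) : 'cV[k]_d := \col_i coord bs i a.
Definition el (v : 'cV[k]_d) : A := \sum_i v i 0 *: bs`_i.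

Lemma bs_free : free bs.
Proof. exact: basis_free (vbasisP _). Qed.

Lemma cvK a : el (cv a) = a.
Proof.
rewrite /el [RHS](coord_vbasis (memvf a)).
by apply: eq_bigr => i _; rewrite mxE.
Qed.

Lemma elK v : cv (el v) = v.
Proof. by apply/colP => i; rewrite mxE /el coord_sum_free // bs_free. Qed.

Lemma cv_lin c a b : cv (c *: a + b) = c *: cv a + cv b.
Proof. by apply/colP => i; rewrite !mxE linearP. Qed.

Lemma el_lin c v w : el (c *: v + w) = c *: el v + el w.
Proof.
rewrite /el scaler_sumr -big_split; apply: eq_bigr => i _.
by rewrite !mxE scalerDl scalerA.
Qed.

Lemma tnth_bs (j : 'I_d) : tnth bs j = bs`_j.
Proof. exact: tnth_nth. Qed.

Lemma cv_b (j : 'I_d) : cv bs`_j = delta_mx j 0.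
Proof. by apply/colP => i; rewrite !mxE coord_free ?bs_free // eqxx andbT eq_sym. Qed.

Lemma Lmx_cv a y : Lmx a *m cv y = cv (a * y).
Proof.
rewrite -{2}(cvK y) /el mulr_sumr.
apply/colP => i; rewrite !mxE linear_sum /=; apply: eq_bigr => j _.
by rewrite !mxE -scalerAr linearZ /= tnth_bs mulrC.
Qed.

Lemma Rmx_cv a y : Rmx a *m cv y = cv (y * a).
Proof.
rewrite -{2}(cvK y) /el mulr_suml.
apply/colP => i; rewrite !mxE linear_sum /=; apply: eq_bigr => j _.
by rewrite !mxE -scalerAl linearZ /= tnth_bs mulrC.
Qed.

Lemma Lmx_el a v : Lmx a *m v = cv (a * el v).
Proof. by rewrite -Lmx_cv elK. Qed.

Lemma Rmx_el a v : Rmx a *m v = cv (el v * a).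
Proof. by rewrite -Rmx_cv elK. Qed.

Lemma LmxM a b : Lmx (a * b) = Lmx a *m Lmx b.
Proof. by apply: mx_ext_col => v; rewrite -mulmxA !Lmx_el cvK mulrA. Qed.

Lemma RmxM a b : Rmx (a * b) = Rmx b *m Rmx a.
Proof. by apply: mx_ext_col => v; rewrite -mulmxA !Rmx_el cvK mulrA. Qed.

Lemma LRmx a b : Lmx a *m Rmx b = Rmx b *m Lmx a.
Proof. by apply: mx_ext_col => v; rewrite -!mulmxA !Lmx_el !Rmx_el !cvK mulrA. Qed.

Lemma Lmx1 : Lmx (1 : A) = 1%:M.
Proof. by apply: mx_ext_col => v; rewrite Lmx_el mul1r elK mul1mx. Qed.

Lemma Rmx1 : Rmx (1 : A) = 1%:M.
Proof. by apply: mx_ext_col => v; rewrite Rmx_el mulr1 elK mul1mx. Qed.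

Lemma Lmx_lin c a b : Lmx (c *: a + b) = c *: Lmx a + Lmx b.
Proof.
apply: mx_ext_col => v; rewrite mulmxDl -scalemxAl !Lmx_el.
by rewrite mulrDl -scalerAl cv_lin.
Qed.

Lemma Rmx_lin c a b : Rmx (c *: a + b) = c *: Rmx a + Rmx b.
Proof.
apply: mx_ext_col => v; rewrite mulmxDl -scalemxAl !Rmx_el.
by rewrite mulrDr -scalerAr cv_lin.
Qed.

Lemma Rmx_swap w u : Rmx (el w) *m u = Lmx (el u) *m w.
Proof. by rewrite Rmx_el Lmx_el. Qed.

Section Mod.
Variables (n : nat) (r : A -> 'M[k]_n).
Hypothesis rM : is_lmod r.

Definition rlin : {linear A -> 'M[k]_n} :=
  HB.pack r (GRing.isLinear.Build _ _ _ _ r (let: And3 _ _ h := rM in h)).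

Lemma r1 : r 1 = 1%:M. Proof. by case: rM. Qed.
Lemma rM_mul a b : r (a * b) = r a *m r b. Proof. by case: rM. Qed.
Lemma r_el v : r (el v) = \sum_i v i 0 *: r bs`_i.
Proof. change (r (el v)) with (rlin (el v)); rewrite /el linear_sum; apply: eq_bigr => i _; rewrite linearZ. done. Qed.

Definition act (x : 'cV[k]_n) : 'M[k]_(n, d) := \matrix_(i, j) (r bs`_j *m x) i 0.

Lemma act_el x w : act x *m w = r (el w) *m x.
Proof.
rewrite r_el mulmx_suml; apply/colP => i; rewrite !mxE summxE.
apply: eq_bigr => j _; rewrite !mxE mulr_suml; apply: eq_bigr => l _; rewrite !mxE; ring.
Qed.

Lemma act_cv x a : act x *m cv a = r a *m x.
Proof. by rewrite act_el cvK. Qed.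

Lemma act_Lmx x a : act x *m Lmx a = r a *m act x.
Proof.
by apply: mx_ext_col => v; rewrite -!mulmxA Lmx_el act_cv !act_el rM_mul mulmxA.
Qed.

Lemma act_Rmx x a : act x *m Rmx a = act (r a *m x).
Proof.
by apply: mx_ext_col => v; rewrite -!mulmxA Rmx_el act_cv !act_el rM_mul mulmxA.
Qed.

Lemma act_lin c (x z : 'cV[k]_n) : act (c *: x + z) = c *: act x + act z.
Proof.
by apply/matrixP => i j; rewrite !mxE mulr_sumr -big_split /=; apply: eq_bigr => l _; rewrite !mxE; ring. Qed.

End Mod.

Lemma act_hom n1 n2 (r1 : A -> 'M[k]_n1) (r2 : A -> 'M[k]_n2) (v : 'M[k]_(n2, n1)) x :
  is_lmod r1 -> is_lmod r2 -> is_hom r1 r2 v -> act r2 (v *m x) = v *m act r1 x.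
Proof.
move=> h1 h2 hv; apply: mx_ext_col => w.
by rewrite -mulmxA !act_el // !mulmxA hv.
Qed.

End Coord.


Section Nu.
Variables (k : fieldType) (A : falgType k).
Local Notation d := (adim A).
Local Notation bs := (abasis A).
Implicit Types (a b : A).

Definition Llin : {linear A -> 'M[k]_d} :=
  HB.pack (@Lmx k A) (GRing.isLinear.Build _ _ _ _ (@Lmx k A) (@Lmx_lin k A)).
Definition Rlin : {linear A -> 'M[k]_d} :=
  HB.pack (@Rmx k A) (GRing.isLinear.Build _ _ _ _ (@Rmx k A) (@Rmx_lin k A)).

Lemma Lmx_el_sum v : Lmx (el v) = \sum_i v i 0 *: Lmx bs`_i.
Proof. change (Lmx (el v)) with (Llin (el v)); rewrite /el linear_sum; apply: eq_bigr => i _; rewrite linearZ. done. Qed.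

Variables (n : nat) (r : A -> 'M[k]_n).
Hypothesis rM : is_lmod r.

Definition inH (phi : 'M[k]_(d, n)) := forall a, phi *m r a = Lmx a *m phi.

Lemma inH_space phi : (mxvec phi <= homA_space r)%MS <-> inH phi.
Proof.
have glin : forall i : 'I_d, forall (c : k) (u w : 'M[k]_(d, n)),
   (fun phi : 'M[k]_(d, n) => phi *m r (tnth bs i) - Lmx (tnth bs i) *m phi) (c *: u + w) =
   c *: (fun phi : 'M[k]_(d, n) => phi *m r (tnth bs i) - Lmx (tnth bs i) *m phi) u +
   (fun phi : 'M[k]_(d, n) => phi *m r (tnth bs i) - Lmx (tnth bs i) *m phi) w.
  move=> i c u w /=; rewrite mulmxDl mulmxDr -scalemxAl -scalemxAr scalerBr.
  by rewrite opprD addrACA.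
split.
  move/sub_bigcapmxP => H a.
  have Hi : forall i : 'I_d, phi *m r bs`_i = Lmx bs`_i *m phi.
    move=> i; have := H i isT; move/sub_kermxP; rewrite (mul_vec_lin' (glin i)).
    by rewrite -tnth_bs => /eqP; rewrite mxvec_eq0 subr_eq0 => /eqP.
  rewrite -(cvK a) r_el // Lmx_el_sum mulmx_sumr mulmx_suml.
  by apply: eq_bigr => i _; rewrite -scalemxAr -scalemxAl Hi.
move=> H; apply/sub_bigcapmxP => i _; apply/sub_kermxP.
by rewrite (mul_vec_lin' (glin i)) H subrr linear0.
Qed.

Lemma inH_lin (c : k) phi psi : inH phi -> inH psi -> inH (c *: phi + psi).
Proof.
move=> h1 h2 a; by rewrite mulmxDl mulmxDr -scalemxAl -scalemxAr h1 h2.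
Qed.

Lemma inH0 : inH 0. Proof. by move=> a; rewrite mul0mx mulmx0. Qed.

Lemma inH_sum I (s : seq I) (P : pred I) (F : I -> 'M[k]_(d, n)) :
  (forall i, P i -> inH (F i)) -> inH (\sum_(i <- s | P i) F i).
Proof.
move=> H; elim/big_rec: _ => [|i x Pi Hx]; first exact: inH0.
by rewrite -[F i]scale1r; apply: inH_lin => //; apply: H.
Qed.

Lemma inH_Rmx a phi : inH phi -> inH (Rmx a *m phi).
Proof. by move=> h b; rewrite -mulmxA h !mulmxA LRmx. Qed.

Local Notation N := (nu_dim r).
Local Notation B := (hbase r).

Definition Hv (c : 'rV[k]_N) : 'M[k]_(d, n) := vec_mx (c *m B).
Definition cc (phi : 'M[k]_(d, n)) : 'rV[k]_N := mxvec phi *m pinvmx B.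

Lemma B_space : (B :=: homA_space r)%MS.
Proof. exact: eq_row_base. Qed.

Lemma inH_Hv c : inH (Hv c).
Proof. by apply/inH_space; rewrite vec_mxK -B_space submxMl. Qed.

Lemma HvK c : cc (Hv c) = c.
Proof. by rewrite /cc /Hv vec_mxK mulmxKp // row_base_free. Qed.

Lemma ccK phi : inH phi -> Hv (cc phi) = phi.
Proof.
move/inH_space => h; rewrite /Hv /cc mulmxKpV ?mxvecK //.
by rewrite B_space.
Qed.

Lemma cc_lin (c : k) phi psi : cc (c *: phi + psi) = c *: cc phi + cc psi.
Proof. by rewrite /cc linearP /= mulmxDl -scalemxAl. Qed.

Lemma Hv_lin (c : k) (u w : 'rV[k]_N) : Hv (c *: u + w) = c *: Hv u + Hv w.
Proof. by rewrite /Hv mulmxDl -scalemxAl linearP. Qed.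

Lemma cc_inj phi psi : inH phi -> inH psi -> cc phi = cc psi -> phi = psi.
Proof. by move=> h1 h2 e; rewrite -(ccK h1) -(ccK h2) e. Qed.

Lemma nu_actE c a : c *m nu_act r a = cc (Rmx a *m Hv c).
Proof.
apply: mul_rV_lin1' => s u w.
by rewrite /= mulmxDl -scalemxAl linearP /= mulmxDr -scalemxAr linearP /= mulmxDl -scalemxAl.
Qed.

Lemma nu_lmod : is_lmod (nu_act r).
Proof.
split.
- apply: mx_ext_row => c; rewrite nu_actE Rmx1 mul1mx mulmx1 HvK //.
- move=> a b; apply: mx_ext_row => c; rewrite mulmxA !nu_actE ccK; last exact/inH_Rmx/inH_Hv.
  by rewrite RmxM mulmxA.
- move=> s a b; apply: mx_ext_row => c.
  by rewrite mulmxDr -scalemxAr !nu_actE Rmx_lin mulmxDl -scalemxAl cc_lin.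
Qed.

End Nu.
Arguments Hv [k A n] r c.
Arguments cc [k A n] r phi.
Arguments inH [k A n] r phi.

Section NuMor.
Variables (k : fieldType) (A : falgType k).
Variables (n1 n0 : nat) (r1 : A -> 'M[k]_n1) (r0 : A -> 'M[k]_n0) (f : 'M[k]_(n0, n1)).
Hypotheses (rM1 : is_lmod r1) (rM0 : is_lmod r0) (hf : is_hom r1 r0 f).

Lemma inH_f phi : inH r0 phi -> inH r1 (phi *m f).
Proof. by move=> h a; rewrite -mulmxA hf mulmxA h mulmxA. Qed.

Lemma nu_morE c0 : c0 *m nu_mor r1 r0 f = cc r1 (Hv r0 c0 *m f).
Proof.
apply: mul_rV_lin1' => s u w.
by rewrite /= mulmxDl -scalemxAl linearP /= mulmxDl -scalemxAl linearP /= mulmxDl -scalemxAl.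
Qed.

Lemma nu_mor_hom : is_hom (nu_act r1) (nu_act r0) (nu_mor r1 r0 f).
Proof.
move=> a; apply: mx_ext_row => c0.
rewrite !mulmxA nu_morE nu_actE ccK; last exact/inH_f/inH_Hv.
rewrite nu_actE nu_morE ccK ?mulmxA //; first [exact: inH_Rmx (inH_Hv rM0 _) | done | idtac]. all: try done. all: try exact: inH_Rmx (inH_Hv rM0 _).
Qed.

End NuMor.


Section DB.
Variables (k : fieldType) (A : falgType k).
Local Notation d := (adim A).

Lemma mxdiag_mul p (p_ : 'I_p -> nat) (B C : forall i, 'M[k]_(p_ i)) :
  \mxdiag_i B i *m \mxdiag_i C i = \mxdiag_i (B i *m C i).
Proof.
have E D : \mxdiag_i D i = \mxcol_i (D i *m submxcol (1%:M : 'M[k]_(\sum_i p_ i)) i).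
  by rewrite -mul_mxdiag_mxcol submxcolK mulmx1.
by rewrite (E C) mul_mxdiag_mxcol (E (fun i => B i *m C i)); apply/eq_mxcol => i; rewrite mulmxA.
Qed.

Lemma mxdiag_scale p (p_ : 'I_p -> nat) (c : k) (B : forall i, 'M[k]_(p_ i)) :
  \mxdiag_i (c *: B i) = c *: \mxdiag_i B i.
Proof.
by rewrite -mul_mx_scalar -mxdiagZ mxdiag_mul; apply/eq_mxdiag => i; rewrite mul_mx_scalar.
Qed.

Definition dual_basis n (r : A -> 'M[k]_n) :=
  exists m (Phi : 'I_m -> 'M[k]_(d, n)) (p : 'I_m -> 'cV[k]_n),
    (forall i, inH r (Phi i)) /\ \sum_i act r (p i) *m Phi i = 1%:M.

Lemma proj_db n (r : A -> 'M[k]_n) : is_proj r -> dual_basis r.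
Proof.
case=> rM Hp.
pose rF (a : A) : 'M[k]_(\sum_(j < n) d) := \mxdiag_(j < n) Lmx a.
pose E : 'M[k]_(n, \sum_(j < n) d) := \mxrow_(j < n) act r (delta_mx j 0).
have rFM : is_lmod rF.
  split.
  - by rewrite /rF Lmx1 mxdiagZ.
  - by move=> a b; rewrite /rF mxdiag_mul LmxM.
  - move=> c a b; rewrite /rF Lmx_lin mxdiagD mxdiag_scale //.
have EH : is_hom rF r E.
  move=> a; rewrite /E /rF mul_mxrow_mxdiag mul_mxrow; apply/eq_mxrow => j.
  exact: act_Lmx.
have Erk : \rank E = n.
  pose S : 'M[k]_(\sum_(j < n) d, n) := \mxcol_(j < n) (cv 1 *m delta_mx 0 j).
  have ES : E *m S = 1%:M.
    rewrite /E /S mul_mxrow_mxcol mx1_sum_delta; apply: eq_bigr => j _.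
    by rewrite mulmxA act_cv // r1 // mul1mx mul_delta_mx.
  apply/eqP; rewrite eqn_leq rank_leq_row /=.
  by rewrite -{1}(mxrank1 k n) -ES mxrankM_maxl.
have uH : is_hom r r 1%:M by move=> a; rewrite mul1mx mulmx1.
have [v [vH Ev]] := Hp _ _ rF r E 1%:M rFM rM EH Erk uH.
exists n, (fun j => submxcol v j), (fun j => delta_mx j 0); split.
  move=> j a; rewrite submxcol_mul vH /rF.
  by rewrite -[v in _ *m v]submxcolK mul_mxdiag_mxcol mxcolK.
by rewrite -mul_mxrow_mxcol submxcolK.
Qed.

End DB.


Section Gen.
Variable k : fieldType.

Lemma gsum m n (g : 'M[k]_(m, n) -> k) :
  (forall a u v, g (a *: u + v) = a * g u + g v) ->
  forall I (r : seq I) (P : pred I) F, g (\sum_(i <- r | P i) F i) = \sum_(i <- r | P i) g (F i).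
Proof.
move=> H I r P F.
have g0 : g 0 = 0.
  have e := H 1 0 0; rewrite scale1r addr0 mul1r in e.
  by apply: (addrI (g 0)); rewrite addr0 -e.
apply: (big_morph g) => // u v.
by rewrite -[u]scale1r H mul1r scale1r.
Qed.

Lemma gscale m n (g : 'M[k]_(m, n) -> k) :
  (forall a u v, g (a *: u + v) = a * g u + g v) -> forall a u, g (a *: u) = a * g u.
Proof.
move=> H a u; have := gsum H [::] xpredT (fun _ : unit => u); rewrite !big_nil => g0.
by rewrite -[a *: u]addr0 H g0 addr0.
Qed.

Lemma lin_functional m (g : 'cV[k]_m -> k) :
  (forall a u v, g (a *: u + v) = a * g u + g v) ->
  forall x, g x = \sum_l x l 0 * g (delta_mx l 0).
Proof.
move=> H x; rewrite {1}(matrix_sum_delta x) (gsum H); apply: eq_bigr => l _.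
by rewrite big_ord1 (gscale H) (ord1 0).
Qed.

Lemma mx_entry m n (Z : 'M[k]_(m, n)) i l : ((delta_mx 0 i : 'rV_m) *m Z *m (delta_mx l 0 : 'cV_n)) 0 0 = Z i l.
Proof. by rewrite -rowE -colE !mxE. Qed.

Lemma mx_ext2 m n (X Y : 'M[k]_(m, n)) :
  (forall (c : 'rV_m) (x : 'cV_n), (c *m X *m x) 0 0 = (c *m Y *m x) 0 0) -> X = Y.
Proof. by move=> H; apply/matrixP => i l; rewrite -(mx_entry X) -(mx_entry Y) H. Qed.

End Gen.


Section Nak1.
Variables (k : fieldType) (A : falgType k).
Local Notation d := (adim A).
Local Notation bs := (abasis A).
Variables (n : nat) (r : A -> 'M[k]_n) (nX : nat) (rX : A -> 'M[k]_nX).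
Hypotheses (rM : is_lmod r) (rXM : is_lmod rX).

Lemma cc_sum I (s : seq I) (P : pred I) (F : I -> 'M[k]_(d, n)) :
  cc r (\sum_(i <- s | P i) F i) = \sum_(i <- s | P i) cc r (F i).
Proof. by rewrite /cc linear_sum mulmx_suml. Qed.

Lemma pair_bal (be : 'M[k]_(nu_dim r, nX)) : is_hom rX (nu_act r) be ->
  forall a phi (x : 'cV[k]_nX), inH r phi -> cc r (Rmx a *m phi) *m be *m x = cc r phi *m be *m (rX a *m x).
Proof.
move=> hb a phi x hphi; rewrite -{1}(ccK rM hphi) -nu_actE.
by rewrite -(mulmxA _ (nu_act r a)) -hb !mulmxA.
Qed.

Variables (m : nat) (Phi : 'I_m -> 'M[k]_(d, n)) (p : 'I_m -> 'cV[k]_n).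
Hypotheses (hPhi : forall i, inH r (Phi i)) (hs : \sum_i act r (p i) *m Phi i = 1%:M).

Lemma DB1 phi : inH r phi -> phi = \sum_i Rmx (el (phi *m p i)) *m Phi i.
Proof.
move=> h; apply: mx_ext_col => q; rewrite mulmx_suml.
transitivity (phi *m (\sum_i act r (p i) *m Phi i) *m q); first by rewrite hs mulmx1.
rewrite mulmx_sumr mulmx_suml; apply: eq_bigr => i _.
by rewrite -!mulmxA Rmx_swap act_el // !mulmxA h.
Qed.

Lemma L1 (be : 'M[k]_(nu_dim r, nX)) : is_hom rX (nu_act r) be ->
  forall phi (x : 'cV[k]_nX), inH r phi ->
  cc r phi *m be *m x = \sum_i cc r (Phi i) *m be *m (act rX x *m phi *m p i).
Proof.
move=> hb phi x h; rewrite [in LHS](DB1 h) cc_sum !mulmx_suml.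
apply: eq_bigr => i _; rewrite pair_bal //.
by rewrite -(mulmxA (act rX x)) act_el.
Qed.

End Nak1.

Section HomSp.
Variables (k : fieldType) (A : falgType k).
Local Notation d := (adim A).
Local Notation bs := (abasis A).

Definition homsp n n' (r : A -> 'M[k]_n) (r' : A -> 'M[k]_n') : 'M[k]_(n' * n) :=
  (\bigcap_(i < d) kermx (lin_mx (fun u : 'M[k]_(n', n) => u *m r (tnth bs i) - r' (tnth bs i) *m u)))%MS.

Lemma homsp_P n n' (r : A -> 'M[k]_n) (r' : A -> 'M[k]_n') u :
  is_lmod r -> is_lmod r' -> (mxvec u <= homsp r r')%MS <-> is_hom r r' u.
Proof.
move=> rM rM'.
have glin : forall i : 'I_d, forall (c : k) (u w : 'M[k]_(n', n)),
   (fun u : 'M[k]_(n', n) => u *m r (tnth bs i) - r' (tnth bs i) *m u) (c *: u + w) =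
   c *: (fun u : 'M[k]_(n', n) => u *m r (tnth bs i) - r' (tnth bs i) *m u) u +
   (fun u : 'M[k]_(n', n) => u *m r (tnth bs i) - r' (tnth bs i) *m u) w.
  move=> i c u1 w /=; rewrite mulmxDl mulmxDr -scalemxAl -scalemxAr scalerBr.
  by rewrite opprD addrACA.
split.
  move/sub_bigcapmxP => H a.
  have Hi : forall i : 'I_d, u *m r bs`_i = r' bs`_i *m u.
    move=> i; have := H i isT; move/sub_kermxP; rewrite (mul_vec_lin' (glin i)).
    by rewrite -tnth_bs => /eqP; rewrite mxvec_eq0 subr_eq0 => /eqP.
  rewrite -(cvK a) !r_el // mulmx_sumr mulmx_suml.
  by apply: eq_bigr => i _; rewrite -scalemxAr -scalemxAl Hi.
move=> H; apply/sub_bigcapmxP => i _; apply/sub_kermxP.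
by rewrite (mul_vec_lin' (glin i)) H subrr linear0.
Qed.

End HomSp.

Section Nak2.
Variables (k : fieldType) (A : falgType k).
Local Notation d := (adim A).
Variables (n1 n0 : nat) (r1 : A -> 'M[k]_n1) (r0 : A -> 'M[k]_n0) (f : 'M[k]_(n0, n1)).
Hypotheses (rM1 : is_lmod r1) (rM0 : is_lmod r0) (hf : is_hom r1 r0 f).
Variables (nX : nat) (rX : A -> 'M[k]_nX).
Hypothesis rXM : is_lmod rX.

Definition Surj := forall v : 'M[k]_(nX, n1), is_hom r1 rX v ->
  exists u : 'M[k]_(nX, n0), is_hom r0 rX u /\ u *m f = v.
Definition Tb := forall be : 'M[k]_(nu_dim r1, nX), is_hom rX (nu_act r1) be ->
  nu_mor r1 r0 f *m be = 0 -> be = 0.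

Lemma act_inH_hom n (r : A -> 'M[k]_n) x phi : inH r phi -> is_hom r rX (act rX x *m phi).
Proof. by move=> h a; rewrite -mulmxA h mulmxA act_Lmx // mulmxA. Qed.

Lemma surj_Tb : dual_basis r1 -> dual_basis r0 -> Surj -> Tb.
Proof.
move=> [m1 [Phi [p [hPhi hs1]]]] [m0 [Psi [q [hPsi hs0]]]] hS be hb hnb.
apply: mx_ext2 => c x; rewrite mulmx0 mul0mx.
suff -> : c *m be *m x = 0 by [].
have hphi := inH_Hv rM1 c.
rewrite -(HvK c) (L1 rM1 rXM hPhi hs1 hb _ hphi).
have [u [hu uf]] := hS _ (act_inH_hom x hphi).
rewrite -uf.
have ue : forall w : 'cV[k]_n0, u *m w = \sum_j act rX (u *m q j) *m (Psi j *m w).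
  move=> w; rewrite -{1}[u]mulmx1 -hs0 mulmx_sumr mulmx_suml; apply: eq_bigr => j _.
  by rewrite (act_hom _ rM0 rXM hu) !mulmxA.
under eq_bigr do rewrite -(mulmxA u) ue mulmx_sumr.
rewrite exchange_big /= big1 // => j _.
transitivity (cc r1 (Psi j *m f) *m be *m (u *m q j)).
  rewrite (L1 rM1 rXM hPhi hs1 hb _ (inH_f hf (hPsi j))); apply: eq_bigr => i _.
  by rewrite !mulmxA.
rewrite -{1}(ccK rM0 (hPsi j)) -nu_morE // -(mulmxA _ (nu_mor _ _ _)) hnb mulmx0 mul0mx.
done.
Qed.

Lemma Tb_surj : dual_basis r1 -> Tb -> Surj.
Proof.
move=> [m1 [Phi [p [hPhi hs1]]]] hT v hv.
have flin : forall a (u w : 'M[k]_(nX, n0)), (fun u => u *m f) (a *: u + w) = a *: (fun u => u *m f) u + (fun u => u *m f) w.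
  by move=> a u w /=; rewrite mulmxDl -scalemxAl.
pose S := (homsp r0 rX *m lin_mx (fun u : 'M[k]_(nX, n0) => u *m f))%R.
have Sf : forall u, is_hom r0 rX u -> (mxvec (u *m f) <= S)%MS.
  move=> u hu; rewrite -(mul_vec_lin' flin) submxMr //; exact/homsp_P.
case: (boolP (mxvec v <= S)%MS) => hvS.
  case/submxP: hvS => D e; exists (vec_mx (D *m homsp r0 rX)); split.
    by apply/homsp_P => //; rewrite vec_mxK submxMl.
  apply: (can_inj mxvecK); rewrite -(mul_vec_lin' flin) vec_mxK e mulmxA //.
exfalso.
have : mxvec v *m cokermx S != 0 by rewrite -submxE.
case/rV0Pn => j hj.
pose w : 'cV[k]_(nX * n1) := cokermx S *m delta_mx j 0.
pose lam (M : 'M[k]_(nX, n1)) := (mxvec M *m w) 0 0.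
have lam_lin : forall a M M', lam (a *: M + M') = a * lam M + lam M'.
  by move=> a M M'; rewrite /lam linearP /= mulmxDl -scalemxAl !mxE.
have lam_f : forall u, is_hom r0 rX u -> lam (u *m f) = 0.
  move=> u hu; have := Sf u hu; rewrite submxE => /eqP e.
  by rewrite /lam /w mulmxA e mul0mx mxE.
have lam_v : lam v != 0 by rewrite /lam /w mulmxA -colE mxE.
pose G (c : 'rV[k]_(nu_dim r1)) : 'rV[k]_nX := \row_l lam (act rX (delta_mx l 0) *m Hv r1 c).
have Glin : forall a (u w : 'rV[k]_(nu_dim r1)), G (a *: u + w) = a *: G u + G w.
  by move=> a u1 w1; apply/rowP => l; rewrite !mxE Hv_lin mulmxDr -scalemxAr lam_lin.
pose be := lin1_mx G.
have beE : forall c x, (c *m be *m x) 0 0 = lam (act rX x *m Hv r1 c).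
  move=> c x; rewrite mul_rV_lin1' // mxE.
  have glin : forall a (u w : 'cV[k]_nX), (fun x => lam (act rX x *m Hv r1 c)) (a *: u + w) =
     a * (fun x => lam (act rX x *m Hv r1 c)) u + (fun x => lam (act rX x *m Hv r1 c)) w.
    by move=> a u1 w1 /=; rewrite act_lin // mulmxDl -scalemxAl lam_lin.
  rewrite (lin_functional glin x); apply: eq_bigr => l _; rewrite mxE mulrC //.
have hb : is_hom rX (nu_act r1) be.
  move=> a; apply: mx_ext2 => c x.
  rewrite !mulmxA -(mulmxA _ (rX a) x) !beE nu_actE ccK //; last exact/inH_Rmx/inH_Hv.
  by rewrite mulmxA act_Rmx.
have hnb : nu_mor r1 r0 f *m be = 0.
  apply: mx_ext2 => c0 x; rewrite mulmx0 mul0mx mulmxA beE nu_morE // ccK //;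
    last exact/(inH_f hf)/inH_Hv.
  by rewrite mulmxA lam_f ?mxE //; apply: act_inH_hom; apply: inH_Hv.
have be0 := hT be hb hnb.
have : lam v = 0.
  rewrite -[v]mulmx1 -hs1 mulmx_sumr (gsum lam_lin); apply: big1 => i _.
  rewrite mulmxA -(act_hom _ rM1 rXM hv) -(ccK rM1 (hPhi i)) -beE be0 mulmx0 mul0mx mxE //.
by move/eqP; rewrite (negbTE lam_v).
Qed.

End Nak2.


Section LinAlg.
Variable k : fieldType.

Lemma ker_im nX nY nZ (g : 'M[k]_(nY, nX)) (h : 'M[k]_(nZ, nY)) :
  h *m g = 0 -> (\rank g + \rank h)%N = nY ->
  forall p (M : 'M[k]_(nY, p)), h *m M = 0 -> exists N, M = g *m N.
Proof.
move=> hg hr p M hM.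
have K1 : (M^T <= kermx h^T)%MS by apply/sub_kermxP; rewrite -trmx_mul hM trmx0.
have K2 : (g^T <= kermx h^T)%MS by apply/sub_kermxP; rewrite -trmx_mul hg trmx0.
have [_ e] := mxrank_leqif_eq K2.
have e3 : (nY - \rank h = \rank g)%N by apply/eqP; rewrite -(eqn_add2r (\rank h)) subnK ?rank_leq_col // hr.
move: e; rewrite mxrank_ker !mxrank_tr e3 eqxx => /esym /andP [_ K3].
have /submxP [D e2] := submx_trans K1 K3.
by exists D^T; rewrite -[M]trmxK e2 trmx_mul trmxK.
Qed.

Lemma coker_im n0 n1 nC (f : 'M[k]_(n0, n1)) (pi : 'M[k]_(nC, n0)) :
  pi *m f = 0 -> (\rank f + \rank pi)%N = n0 ->
  forall p (u : 'M[k]_(p, n0)), u *m f = 0 -> exists v, u = v *m pi.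
Proof.
move=> hpf hr p u hu.
have [| | |N e] := @ker_im nC n0 n1 pi^T f^T _ _ p u^T.
- by rewrite -trmx_mul hpf trmx0.
- by rewrite !mxrank_tr addnC.
- by rewrite -trmx_mul hu trmx0.
by exists N^T; rewrite -[u]trmxK e trmx_mul trmxK.
Qed.

Lemma linv m n (g : 'M[k]_(m, n)) : \rank g = n -> exists g', g' *m g = 1%:M.
Proof. by move=> h; apply/row_fullP; rewrite /row_full h. Qed.

Lemma rinv m n (h : 'M[k]_(m, n)) : \rank h = m -> exists h', h *m h' = 1%:M.
Proof. by move=> e; apply/row_freeP; rewrite /row_free e. Qed.

Lemma linv_cancel m n p (g : 'M[k]_(m, n)) (X Y : 'M[k]_(n, p)) :
  \rank g = n -> g *m X = g *m Y -> X = Y.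
Proof. by move=> /linv [g' e] E; rewrite -[X]mul1mx -e -mulmxA E mulmxA e mul1mx. Qed.

Lemma rinv_cancel m n p (h : 'M[k]_(m, n)) (X Y : 'M[k]_(p, m)) :
  \rank h = m -> X *m h = Y *m h -> X = Y.
Proof. by move=> /rinv [h' e] E; rewrite -[X]mulmx1 -e mulmxA E -mulmxA e mulmx1. Qed.

End LinAlg.

Section Constr.
Variables (k : fieldType) (A : falgType k).

Lemma hom_comp n1 n2 n3 (r1 : A -> 'M[k]_n1) (r2 : A -> 'M[k]_n2) (r3 : A -> 'M[k]_n3) M N :
  is_hom r1 r2 M -> is_hom r2 r3 N -> is_hom r1 r3 (N *m M).
Proof. by move=> h1 h2 a; rewrite -mulmxA h1 mulmxA h2 mulmxA. Qed.

Lemma hom_lin n1 n2 (r1 : A -> 'M[k]_n1) (r2 : A -> 'M[k]_n2) (c : k) M N :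
  is_hom r1 r2 M -> is_hom r1 r2 N -> is_hom r1 r2 (c *: M + N).
Proof. by move=> h1 h2 a; rewrite mulmxDl mulmxDr -scalemxAl -scalemxAr h1 h2. Qed.

Lemma hom_sub n1 n2 (r1 : A -> 'M[k]_n1) (r2 : A -> 'M[k]_n2) M N :
  is_hom r1 r2 M -> is_hom r1 r2 N -> is_hom r1 r2 (M - N).
Proof. by move=> h1 h2 a; rewrite mulmxBl mulmxBr h1 h2. Qed.

Lemma hom_factor_inj nC nK nX (rC : A -> 'M[k]_nC) (rK : A -> 'M[k]_nK) (rX : A -> 'M[k]_nX)
  (g : 'M[k]_(nX, nK)) (N : 'M[k]_(nK, nC)) :
  is_hom rK rX g -> \rank g = nK -> is_hom rC rX (g *m N) -> is_hom rC rK N.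
Proof.
move=> hg rg hM a; apply: (linv_cancel rg).
by rewrite mulmxA hM mulmxA -hg -mulmxA.
Qed.

Lemma hom_factor_surj nY nC nZ (rY : A -> 'M[k]_nY) (rC : A -> 'M[k]_nC) (rZ : A -> 'M[k]_nZ)
  (h : 'M[k]_(nC, nY)) (N : 'M[k]_(nZ, nC)) :
  is_hom rY rC h -> \rank h = nC -> is_hom rY rZ (N *m h) -> is_hom rC rZ N.
Proof.
move=> hh rh hM a; apply: (rinv_cancel rh).
by rewrite -mulmxA -hh mulmxA hM mulmxA.
Qed.

Lemma submod n m (r : A -> 'M[k]_n) (g : 'M[k]_(n, m)) (g' : 'M[k]_(m, n)) :
  is_lmod r -> g' *m g = 1%:M -> (forall a, exists Z, r a *m g = g *m Z) ->
  is_lmod (fun a => g' *m r a *m g) /\ is_hom (fun a => g' *m r a *m g) r g.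
Proof.
move=> rM e st.
have key : forall a, g *m (g' *m r a *m g) = r a *m g.
  move=> a; rewrite -mulmxA; have [Z ->] := st a; by rewrite (mulmxA g') e mul1mx.
split; last by move=> a; rewrite key.
split.
- by rewrite r1 // mulmx1 e.
- move=> a b; have key' : g *m (g' *m (r b *m g)) = r b *m g by rewrite -[in RHS]key !mulmxA.
  by rewrite rM_mul // -!mulmxA key'.
- move=> c a b; case: rM => _ _ ->.
  by rewrite mulmxDr mulmxDl -scalemxAr -scalemxAl.
Qed.

Lemma quotmod n m (r : A -> 'M[k]_n) (pi : 'M[k]_(m, n)) (pi' : 'M[k]_(n, m)) :
  is_lmod r -> pi *m pi' = 1%:M -> (forall a, exists Z, pi *m r a = Z *m pi) ->
  is_lmod (fun a => pi *m r a *m pi') /\ is_hom r (fun a => pi *m r a *m pi') pi.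
Proof.
move=> rM e st.
have key : forall a, pi *m r a *m pi' *m pi = pi *m r a.
  move=> a; have [Z ->] := st a; by rewrite -!mulmxA (mulmxA pi) e mul1mx.
split; last by move=> a; rewrite key.
split.
- by rewrite r1 // mulmx1 e.
- move=> a b; rewrite rM_mul // !mulmxA key //.
- move=> c a b; case: rM => _ _ ->.
  by rewrite mulmxDr mulmxDl -scalemxAr -scalemxAl.
Qed.

Variables (nX nY : nat) (rX : A -> 'M[k]_nX) (rY : A -> 'M[k]_nY) (M : 'M[k]_(nY, nX)).
Hypotheses (rXM : is_lmod rX) (rYM : is_lmod rY) (hM : is_hom rX rY M).

Lemma kernel_exists : exists nK (rK : A -> 'M[k]_nK) (g : 'M[k]_(nX, nK)),
  is_lmod rK /\ is_kernel rK rX rY g M.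
Proof.
pose g := (row_base (kermx M^T))^T.
have Mg : M *m g = 0.
  apply: trmx_inj; rewrite trmx_mul trmxK trmx0; apply/sub_kermxP.
  by rewrite eq_row_base.
have rg : \rank g = \rank (kermx M^T) by rewrite mxrank_tr eq_row_base.
have rgM : (\rank g + \rank M)%N = nX.
  by rewrite rg mxrank_ker mxrank_tr subnK // rank_leq_col.
have [g' e] := linv rg.
have st : forall a, exists Z, rX a *m g = g *m Z.
  move=> a; apply: (ker_im Mg rgM); by rewrite mulmxA hM -mulmxA Mg mulmx0.
have [lm hh] := submod rXM e st.
exists _, (fun a => g' *m rX a *m g), g; split=> //; split=> //.
Qed.

Lemma cokernel_exists : exists nC (rC : A -> 'M[k]_nC) (pi : 'M[k]_(nC, nY)),
  is_lmod rC /\ is_cokernel rX rY rC M pi.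
Proof.
pose pi := row_base (kermx M).
have pM : pi *m M = 0 by apply/sub_kermxP; rewrite eq_row_base.
have rp : \rank pi = \rank (kermx M) by rewrite eq_row_base.
have rMp : (\rank M + \rank pi)%N = nY.
  by rewrite rp mxrank_ker subnKC // rank_leq_row.
have [pi' e] := rinv rp.
have st : forall a, exists Z, pi *m rY a = Z *m pi.
  move=> a; apply/submxP; rewrite eq_row_base; apply/sub_kermxP.
  by rewrite -mulmxA -hM mulmxA pM mul0mx.
have [lm hh] := quotmod rYM e st.
exists _, (fun a => pi *m rY a *m pi'), pi; split=> //; split=> //.
Qed.

End Constr.

Lemma image_exists (k : fieldType) (A : falgType k) (nX nY : nat) (rX : A -> 'M[k]_nX) (rY : A -> 'M[k]_nY) (M : 'M[k]_(nY, nX)) :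
  is_lmod rX -> is_lmod rY -> is_hom rX rY M ->
  exists nI (rI : A -> 'M[k]_nI) (gI : 'M[k]_(nY, nI)) (e : 'M[k]_(nI, nX)),
  is_lmod rI /\ is_hom rI rY gI /\ \rank gI = nI /\ is_hom rX rI e /\ \rank e = nI /\ gI *m e = M.
Proof.
move=> rXM rYM hM.
have [nC [rC [pi [rCM [hpi pM rpi rMp]]]]] := cokernel_exists rYM hM.
have [nI [rI [gI [rIM [hgI pg rgI rgp]]]]] := kernel_exists rYM hpi.
have [e eM] := ker_im pg rgp pM.
have he : is_hom rX rI e by apply: (hom_factor_inj hgI) => //; rewrite -eM.
exists nI, rI, gI, e; do 5 (split=> //).
apply/eqP; rewrite eqn_leq rank_leq_row /=.
have : (\rank gI = \rank M)%N by apply/eqP; rewrite -(eqn_add2r (\rank pi)) rMp rgp.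
move=> eq1; apply: leq_trans (mxrankM_maxr gI e); by rewrite -eM -eq1 rgI.
Qed.



Lemma hom_add (k : fieldType) (A : falgType k) n1 n2 (r1 : A -> 'M[k]_n1) (r2 : A -> 'M[k]_n2) M N :
  is_hom r1 r2 M -> is_hom r1 r2 N -> is_hom r1 r2 (M + N).
Proof. by move=> h1 h2 a; rewrite mulmxDl mulmxDr h1 h2. Qed.

Section Main.
Variables (k : fieldType) (A : falgType k).
Variables (n1 n0 : nat) (r1 : A -> 'M[k]_n1) (r0 : A -> 'M[k]_n0) (f : 'M[k]_(n0, n1)).
Hypotheses (rM1 : is_lmod r1) (rM0 : is_lmod r0) (hf : is_hom r1 r0 f).
Hypotheses (db1 : dual_basis r1) (db0 : dual_basis r0).
Variables (nK0 : nat) (rK0 : A -> 'M[k]_nK0) (i0 : 'M[k]_(nu_dim r1, nK0)).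
Hypotheses (rK0M : is_lmod rK0) (hker : is_kernel rK0 (nu_act r1) (nu_act r0) i0 (nu_mor r1 r0 f)).
Variables (nC0 : nat) (rC0 : A -> 'M[k]_nC0) (p0 : 'M[k]_(nC0, n0)).
Hypotheses (rC0M : is_lmod rC0) (hcok : is_cokernel r1 r0 rC0 f p0).

Definition Inj nX (rX : A -> 'M[k]_nX) :=
  forall u : 'M[k]_(nX, n0), is_hom r0 rX u -> u *m f = 0 -> u = 0.

Hypotheses (P1 : is_proj r1) (P0 : is_proj r0).

Lemma W_surj nX (rX : A -> 'M[k]_nX) (rXM : is_lmod rX) : Tbar r1 r0 f rX -> Surj r1 r0 f rX.
Proof.
move=> hT; apply: (Tb_surj rM1 rM0 hf rXM db1) => be hb hnb.
case: hker => hi vi ri rvi.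
have [N eN] := ker_im vi rvi hnb.
have hN : is_hom rX rK0 N by apply: (hom_factor_inj hi ri); rewrite -eN.
by rewrite eN (hT _ _ _ rK0M hker N hN) mulmx0.
Qed.

Lemma W_inj nX (rX : A -> 'M[k]_nX) (rXM : is_lmod rX) : Fbar r1 r0 f rX -> Inj rX.
Proof.
move=> hF u hu uf; case: hcok => hp pf rp rfp.
have [v ev] := coker_im pf rfp uf.
have hv : is_hom rC0 rX v by apply: (hom_factor_surj hp rp); rewrite -ev.
by rewrite ev (hF _ _ _ rC0M hcok v hv) mul0mx.
Qed.

Lemma surj_W nX (rX : A -> 'M[k]_nX) (rXM : is_lmod rX) : Surj r1 r0 f rX -> Tbar r1 r0 f rX.
Proof.
move=> hS; have hTb := surj_Tb rM1 rM0 hf rXM db1 db0 hS.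
move=> nK rK i _ [hi vi ri _] M hM.
apply: (linv_cancel ri); rewrite mulmx0; apply: hTb; first exact: hom_comp hM hi.
by rewrite mulmxA vi mul0mx.
Qed.

Lemma inj_W nX (rX : A -> 'M[k]_nX) (rXM : is_lmod rX) : Inj rX -> Fbar r1 r0 f rX.
Proof.
move=> hI nC rC p _ [hp pf rp _] N hN.
apply: (rinv_cancel rp); rewrite mul0mx; apply: hI; first exact: hom_comp hp hN.
by rewrite -mulmxA pf mulmx0.
Qed.


Lemma W_iff nX (rX : A -> 'M[k]_nX) (rXM : is_lmod rX) :
  Wf r1 r0 f rX <-> Surj r1 r0 f rX /\ Inj rX.
Proof.
split; first by case=> hT hF; split; [exact: W_surj | exact: W_inj].
by case=> hS hI; split; [exact: surj_W | exact: inj_W].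
Qed.

Lemma wide_main : is_wide (Wf r1 r0 f).
Proof.
have Hp1 := P1.2; have Hp0 := P0.2.
split.
- move=> nX nY rX rY M rXM rYM /(W_iff rXM) [SX IX] /(W_iff rYM) [SY IY] hM.
  move=> nK rK g rKM [hg Mg rg rgM]; apply/(W_iff rKM); split.
    move=> v hv; have [u [hu uf]] := SX (g *m v) (hom_comp hv hg).
    have Mu0 : M *m u = 0.
      by apply: IY (hom_comp hu hM) _; rewrite -mulmxA uf mulmxA Mg mul0mx.
    have [w e] := ker_im Mg rgM Mu0.
    exists w; split; first by apply: (hom_factor_inj hg rg); rewrite -e.
    by apply: (linv_cancel rg); rewrite mulmxA -e uf.
  move=> u hu uf; apply: (linv_cancel rg); rewrite mulmx0.
  by apply: IX (hom_comp hu hg) _; rewrite -mulmxA uf mulmx0.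
- move=> nX nY rX rY M rXM rYM /(W_iff rXM) [SX IX] /(W_iff rYM) [SY IY] hM.
  move=> nC rC h rCM [hh hM0 rh rMh]; apply/(W_iff rCM); split.
    move=> v hv; have [v' [hv' ev]] := Hp1 _ _ rY rC h v rYM rCM hh rh hv.
    have [u [hu uf]] := SY v' hv'.
    exists (h *m u); split; first exact: hom_comp hu hh.
    by rewrite -mulmxA uf.
  move=> u hu uf.
  have [u' [hu' eu]] := Hp0 _ _ rY rC h u rYM rCM hh rh hu.
  have [nI [rI [gI [e [rIM [hgI [rgI [he [re egI]]]]]]]]] := image_exists rXM rYM hM.
  have hgI0 : h *m gI = 0.
    by apply: (rinv_cancel re); rewrite -mulmxA egI hM0 mul0mx.
  have rkM : \rank M = nI by rewrite -egI mxrankMfree ?rgI // /row_free re.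
  have rk : (\rank gI + \rank h)%N = nY by rewrite rgI -rkM.
  have hd : h *m (u' *m f) = 0 by rewrite mulmxA eu.
  have [z ez] := ker_im hgI0 rk hd.
  have hz : is_hom r1 rI z by apply: (hom_factor_inj hgI rgI); rewrite -ez; exact: hom_comp hf hu'.
  have [w [hw ew]] := Hp1 _ _ rX rI e z rXM rIM he re hz.
  have Mw : M *m w = u' *m f by rewrite -egI -mulmxA ew ez.
  have [t [ht tf]] := SX w hw.
  have : u' - M *m t = 0.
    apply: IY; first exact: hom_sub hu' (hom_comp ht hM).
    by rewrite mulmxBl -mulmxA tf Mw subrr.
  move/eqP; rewrite subr_eq0 => /eqP eu'.
  by rewrite -eu eu' mulmxA hM0 mul0mx.
- move=> nX nY nZ rX rY rZ g h rXM rYM rZM /(W_iff rXM) [SX IX] /(W_iff rZM) [SZ IZ].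
  move=> [[hg hh hg0 rg rh] eqn]; apply/(W_iff rYM).
  have rk : (\rank g + \rank h)%N = nY by rewrite rg rh.
  split.
    move=> v hv; have [uZ [huZ uZf]] := SZ (h *m v) (hom_comp hv hh).
    have [uY [huY euY]] := Hp0 _ _ rY rZ h uZ rYM rZM hh rh huZ.
    have hd : h *m (v - uY *m f) = 0 by rewrite mulmxBr mulmxA euY uZf subrr.
    have [vX evX] := ker_im hg0 rk hd.
    have hvX : is_hom r1 rX vX.
      by apply: (hom_factor_inj hg rg); rewrite -evX; apply: hom_sub hv (hom_comp hf huY).
    have [uX [huX uXf]] := SX vX hvX.
    exists (uY + g *m uX); split; first exact: hom_add huY (hom_comp huX hg).
    by rewrite mulmxDl -mulmxA uXf -evX addrC subrK.
  move=> u hu uf.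
  have hu0 : h *m u = 0.
    by apply: IZ (hom_comp hu hh) _; rewrite -mulmxA uf mulmx0.
  have [w ew] := ker_im hg0 rk hu0.
  have hw : is_hom r0 rX w by apply: (hom_factor_inj hg rg); rewrite -ew.
  have w0 : w = 0.
    apply: IX hw _; apply: (linv_cancel rg); by rewrite mulmxA -ew uf mulmx0.
  by rewrite ew w0 mulmx0.
Qed.

End Main.

Theorem wide_final (k : fieldType) (A : falgType k) (n1 n0 : nat)
  (r1 : A -> 'M[k]_n1) (r0 : A -> 'M[k]_n0) (f : 'M[k]_(n0, n1)) :
  is_proj r1 -> is_proj r0 -> is_hom r1 r0 f -> is_wide (Wf r1 r0 f).
Proof.
move=> P1 P0 hf.
have db1 := proj_db P1; have db0 := proj_db P0.
have rM1 := P1.1; have rM0 := P0.1.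
have nM1 := nu_lmod rM1.
have [nK0 [rK0 [i0 [rK0M hker]]]] := kernel_exists nM1 (nu_mor_hom rM1 rM0 hf).
have [nC0 [rC0 [p0 [rC0M hcok]]]] := cokernel_exists rM0 hf.
exact: (wide_main rM1 rM0 hf db1 db0 rK0M hker rC0M hcok P1 P0).
Qed.


Theorem proposition3p7 (k : closedFieldType) (A : falgType k) (n1 n0 : nat)
  (rP1 : A -> 'M[k]_n1) (rP0 : A -> 'M[k]_n0) (f : 'M[k]_(n0, n1)) :
  is_proj rP1 -> is_proj rP0 -> is_hom rP1 rP0 f ->
  is_wide (Wf rP1 rP0 f).
Proof.
exact: wide_final.
Qed.
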